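(* For all complex $q$ with $|q|<1$, $$F^{\rm ed}_{\rm od}(q)=\frac{q\,(-q^2;q^2)_\infty}{1-q}\left(2-\frac{(-q;q^2)_\infty}{(-q^2;q^2)_\infty}\right).$$
   Context: For $n\in\mathbb N_0\cup\{\infty\}$, $(a;q)_n:=\prod_{j=0}^{n-1}(1-aq^j)$. Define $$F^{\rm ed}_{\rm od}(q):=\sum_{n=0}^\infty q^{2n+1}(-q;q^2)_n(-q^{2n+2};q^2)_\infty,$$ the generating function for partitions into at least one odd part, with odd parts distinct, and even parts distinct and all larger than every odd part. *)

(* Defs.v *)
From Stdlib Require Import Reals.
Open Scope R_scope.

Definition Cplx : Type := (R * R)%type.

Definition RtoC (x : R) : Cplx := (x, 0).
Definition Czero : Cplx := (0, 0).
Definition Cone : Cplx := (1, 0).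
Definition Cadd (z w : Cplx) : Cplx := (fst z + fst w, snd z + snd w).
Definition Copp (z : Cplx) : Cplx := (- fst z, - snd z).
Definition Csub (z w : Cplx) : Cplx := Cadd z (Copp w).
Definition Cmul (z w : Cplx) : Cplx :=
  (fst z * fst w - snd z * snd w, fst z * snd w + snd z * fst w).
Definition Cinv (z : Cplx) : Cplx :=
  (fst z / (fst z ^ 2 + snd z ^ 2), - snd z / (fst z ^ 2 + snd z ^ 2)).
Definition Cdiv (z w : Cplx) : Cplx := Cmul z (Cinv w).
Fixpoint Cpow (z : Cplx) (n : nat) : Cplx :=
  match n with O => Cone | S m => Cmul z (Cpow z m) end.
Definition Cmod (z : Cplx) : R := sqrt (fst z ^ 2 + snd z ^ 2).

Definition Ccv (u : nat -> Cplx) (l : Cplx) : Prop :=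
  forall eps : R, eps > 0 -> exists N : nat, forall n : nat, (n >= N)%nat ->
    Cmod (Csub (u n) l) < eps.

Fixpoint Csum (f : nat -> Cplx) (n : nat) : Cplx :=
  match n with O => Czero | S m => Cadd (Csum f m) (f m) end.

Fixpoint qpoch (a q : Cplx) (n : nat) : Cplx :=
  match n with O => Cone | S m => Cmul (qpoch a q m) (Csub Cone (Cmul a (Cpow q m))) end.

Definition qpoch_inf_is (a q l : Cplx) : Prop := Ccv (fun n => qpoch a q n) l.

Definition series_is (f : nat -> Cplx) (s : Cplx) : Prop := Ccv (fun N => Csum f N) s.

(* Main.v *)
From Coquelicot Require Import Rcomplements Rbar Hierarchy Lim_seq Series.
From Coquelicot Require Complex.
Require Import Defs.
From Stdlib Require Import Reals Lra Lia.
Open Scope R_scope.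

Lemma Cmod_mul x y : Cmod (Cmul x y) = Cmod x * Cmod y.
Proof. exact (Complex.Cmod_mult x y). Qed.
Lemma Cmod_tri x y : Cmod (Cadd x y) <= Cmod x + Cmod y.
Proof. exact (Complex.Cmod_triangle x y). Qed.
Lemma Cmod_pos x : 0 <= Cmod x.
Proof. exact (Complex.Cmod_ge_0 x). Qed.
Lemma Cmod_z x : Cmod x = 0 -> x = Czero.
Proof. exact (Complex.Cmod_eq_0 x). Qed.
Lemma Cmod_fst x : Rabs (fst x) <= Cmod x.
Proof. exact (Complex.re_le_Cmod x). Qed.
Lemma Cmod_snd x : Rabs (snd x) <= Cmod x.
Proof. pose proof (Complex.Rmax_Cmod x). pose proof (Rmax_r (Rabs (fst x)) (Rabs (snd x))). unfold Complex.Cmod in *; unfold Cmod. lra. Qed.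
Lemma Cmod_le x : Cmod x <= Rabs (fst x) + Rabs (snd x).
Proof.
  unfold Cmod. set (a := fst x). set (b := snd x).
  pose proof (Rabs_pos a); pose proof (Rabs_pos b).
  rewrite <- (sqrt_pow2 (Rabs a + Rabs b)) by lra.
  apply sqrt_le_1_alt. rewrite <- (pow2_abs a), <- (pow2_abs b). nra.
Qed.
Lemma Cmod_one : Cmod Cone = 1.
Proof. unfold Cmod, Cone; simpl. replace (1 * (1 * 1) + 0 * (0 * 1)) with 1 by ring. exact sqrt_1. Qed.
Lemma Cmod_opp x : Cmod (Copp x) = Cmod x.
Proof. unfold Cmod, Copp; simpl. f_equal. ring. Qed.
Lemma Cmod_pow x n : Cmod (Cpow x n) = Cmod x ^ n.
Proof. induction n; simpl. apply Cmod_one. rewrite Cmod_mul, IHn. ring. Qed.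

Ltac cdes := repeat match goal with x : Cplx |- _ => destruct x end.
Ltac csolve := cdes; unfold Csub, Cdiv, Cadd, Cmul, Copp, Cone, Czero, Cinv; simpl; f_equal; try field; try ring.

Lemma Cring_th : ring_theory Czero Cone Cadd Cmul Csub Copp (@eq Cplx).
Proof. split; intros; csolve. Qed.

Lemma Cfield_th : field_theory Czero Cone Cadd Cmul Csub Copp Cdiv Cinv (@eq Cplx).
Proof.
  split.
  - exact Cring_th.
  - unfold Cone, Czero; intro H; inversion H; lra.
  - reflexivity.
  - intros [a b] H. unfold Cmul, Cinv, Cone; simpl.
    assert (a*(a*1)+b*(b*1) <> 0).
    { intro E. apply H. assert (a = 0) by nra. assert (b = 0) by nra. subst; reflexivity. }
    f_equal; field; contradict H0; nra.
Qed.
Add Field Cfield : Cfield_th.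


Lemma Ccv_comp u l : Ccv u l <->
  is_lim_seq (fun n => fst (u n)) (fst l) /\ is_lim_seq (fun n => snd (u n)) (snd l).
Proof.
  rewrite !is_lim_seq_Reals. unfold Ccv, Un_cv, R_dist. split.
  - intros H; split; intros eps He; destruct (H eps He) as [N HN]; exists N; intros n Hn;
      specialize (HN n Hn).
    + pose proof (Cmod_fst (Csub (u n) l)). simpl in H0. unfold Rminus. lra.
    + pose proof (Cmod_snd (Csub (u n) l)). simpl in H0. unfold Rminus. lra.
  - intros [H1 H2] eps He.
    destruct (H1 (eps/2)) as [N1 HN1]; [lra|].
    destruct (H2 (eps/2)) as [N2 HN2]; [lra|].
    exists (max N1 N2). intros n Hn.
    specialize (HN1 n ltac:(lia)). specialize (HN2 n ltac:(lia)).
    pose proof (Cmod_le (Csub (u n) l)). simpl in H. unfold Rminus in *. lra.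
Qed.

Lemma Ccv_ext u v l : (forall n, u n = v n) -> Ccv u l -> Ccv v l.
Proof. intros E H eps He. destruct (H eps He) as [N HN]. exists N. intros n Hn. rewrite <- E. auto. Qed.

Lemma Ccv_const c : Ccv (fun _ => c) c.
Proof. apply Ccv_comp. split; apply is_lim_seq_const. Qed.

Lemma Ccv_add u v l m : Ccv u l -> Ccv v m -> Ccv (fun n => Cadd (u n) (v n)) (Cadd l m).
Proof.
  rewrite !Ccv_comp. intros [a b] [c d]. simpl. split; apply is_lim_seq_plus'; auto.
Qed.

Lemma Ccv_opp u l : Ccv u l -> Ccv (fun n => Copp (u n)) (Copp l).
Proof.
  rewrite !Ccv_comp. intros [a b]. simpl. split.
  - apply (is_lim_seq_ext (fun n => 0 - fst (u n))). intros; ring.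
    replace (- fst l) with (0 - fst l) by ring. apply is_lim_seq_minus'; auto. apply is_lim_seq_const.
  - apply (is_lim_seq_ext (fun n => 0 - snd (u n))). intros; ring.
    replace (- snd l) with (0 - snd l) by ring. apply is_lim_seq_minus'; auto. apply is_lim_seq_const.
Qed.

Lemma Ccv_sub u v l m : Ccv u l -> Ccv v m -> Ccv (fun n => Csub (u n) (v n)) (Csub l m).
Proof. intros. unfold Csub. apply Ccv_add; auto. apply Ccv_opp; auto. Qed.

Lemma Ccv_mul u v l m : Ccv u l -> Ccv v m -> Ccv (fun n => Cmul (u n) (v n)) (Cmul l m).
Proof.
  rewrite !Ccv_comp. intros [a b] [c d]. simpl. split.
  - apply is_lim_seq_minus'; apply is_lim_seq_mult'; auto.
  - apply is_lim_seq_plus'; apply is_lim_seq_mult'; auto.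
Qed.

Lemma Ccv_inv u l : l <> Czero -> Ccv u l -> Ccv (fun n => Cinv (u n)) (Cinv l).
Proof.
  intros Hl. rewrite !Ccv_comp. intros [a b]. unfold Cinv; simpl.
  assert (D : fst l ^ 2 + snd l ^ 2 <> 0).
  { destruct l as [x y]. simpl. intro E. apply Hl. assert (x = 0) by nra. assert (y = 0) by nra. subst; reflexivity. }
  assert (HD : is_lim_seq (fun n => fst (u n) ^ 2 + snd (u n) ^ 2) (fst l ^ 2 + snd l ^ 2)).
  { apply is_lim_seq_plus'; simpl; rewrite Rmult_1_r;
    [apply (is_lim_seq_ext (fun n => fst (u n) * fst (u n)))|apply (is_lim_seq_ext (fun n => snd (u n) * snd (u n)))];
    try (intros; simpl; ring); apply is_lim_seq_mult'; auto. }
  split.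
  - apply is_lim_seq_div'; auto.
  - apply is_lim_seq_div'; auto.
    apply (is_lim_seq_ext (fun n => 0 - snd (u n))). intros; ring.
    replace (- snd l) with (0 - snd l) by ring. apply is_lim_seq_minus'; auto. apply is_lim_seq_const.
Qed.

Lemma Ccv_div u v l m : m <> Czero -> Ccv u l -> Ccv v m -> Ccv (fun n => Cdiv (u n) (v n)) (Cdiv l m).
Proof. intros. unfold Cdiv. apply Ccv_mul; auto. apply Ccv_inv; auto. Qed.

Lemma Ccv_shift u l k : Ccv u l -> Ccv (fun n => u (k + n)%nat) l.
Proof.
  rewrite !Ccv_comp. intros [a b]. split.
  - apply (is_lim_seq_incr_n _ k) in a. eapply is_lim_seq_ext; [|exact a]. intros; simpl. rewrite Nat.add_comm; auto.
  - apply (is_lim_seq_incr_n _ k) in b. eapply is_lim_seq_ext; [|exact b]. intros; simpl. rewrite Nat.add_comm; auto.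
Qed.

Lemma Ccv_pow0 z : Cmod z < 1 -> Ccv (fun n => Cpow z n) Czero.
Proof.
  intros Hz. pose proof (is_lim_seq_geom (Cmod z)) as H.
  rewrite Rabs_right in H by (apply Rle_ge, Cmod_pos). specialize (H Hz).
  rewrite is_lim_seq_Reals in H. intros eps He. destruct (H eps He) as [N HN].
  exists N. intros n Hn. specialize (HN n Hn). unfold R_dist in HN.
  replace (Csub (Cpow z n) Czero) with (Cpow z n) by ring.
  rewrite Cmod_pow. rewrite Rminus_0_r, Rabs_right in HN; auto.
  apply Rle_ge, pow_le, Cmod_pos.
Qed.

Lemma real_geom_cauchy (x : nat -> R) (C r : R) : 0 <= r < 1 ->
  (forall n, Rabs (x (S n) - x n) <= C * r ^ n) -> exists l : R, is_lim_seq x l.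
Proof.
  intros Hr H. set (d := fun j => x (S j) - x j).
  assert (Hex : ex_series d).
  { apply (ex_series_le d (fun n => C * r ^ n)).
    - intros n. exact (H n).
    - apply (ex_series_scal_l C (fun n => r ^ n)). apply ex_series_geom. rewrite Rabs_right; lra. }
  pose proof (Series_correct d Hex) as HS.
  exists (x 0%nat + Series d).
  apply is_lim_seq_incr_1.
  apply (is_lim_seq_ext (fun m => x 0%nat + sum_n d m)).
  { intros m. induction m.
    - rewrite sum_O. unfold d. ring.
    - rewrite sum_Sn. change (plus (sum_n d m) (d (S m))) with (sum_n d m + d (S m)).
      unfold d at 2. lra. }
  apply is_lim_seq_plus'. apply is_lim_seq_const. exact HS.
Qed.

Lemma cplx_geom_cauchy (u : nat -> Cplx) (C r : R) : 0 <= r < 1 ->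
  (forall n, Cmod (Csub (u (S n)) (u n)) <= C * r ^ n) -> exists l, Ccv u l.
Proof.
  intros Hr H.
  destruct (real_geom_cauchy (fun n => fst (u n)) C r Hr) as [l1 H1].
  { intros n. pose proof (Cmod_fst (Csub (u (S n)) (u n))). simpl in H0. specialize (H n). unfold Rminus. lra. }
  destruct (real_geom_cauchy (fun n => snd (u n)) C r Hr) as [l2 H2].
  { intros n. pose proof (Cmod_snd (Csub (u (S n)) (u n))). simpl in H0. specialize (H n). unfold Rminus. lra. }
  exists (l1, l2). apply Ccv_comp. simpl. auto.
Qed.

Lemma qpoch_exists (a Q : Cplx) : Cmod Q < 1 -> exists l, qpoch_inf_is a Q l.
Proof.
  intros HQ. set (r := Cmod Q). set (al := Cmod a).
  assert (Hr : 0 <= r < 1) by (split; [apply Cmod_pos| exact HQ]).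
  assert (Hal : 0 <= al) by apply Cmod_pos.
  assert (Hfac : forall m, Cmod (Csub Cone (Cmul a (Cpow Q m))) <= 1 + al * r ^ m).
  { intros m. unfold Csub. eapply Rle_trans. apply Cmod_tri. rewrite Cmod_one, Cmod_opp, Cmod_mul, Cmod_pow. fold al r. lra. }
  assert (Hb : forall m, Cmod (qpoch a Q m) <= exp (al * (1 - r ^ m) / (1 - r))).
  { induction m; simpl qpoch.
    - rewrite Cmod_one. simpl. replace (al * (1 - 1) / (1 - r)) with 0 by (field; lra). rewrite exp_0. lra.
    - rewrite Cmod_mul.
      replace (al * (1 - r ^ S m) / (1 - r)) with (al * (1 - r ^ m) / (1 - r) + al * r ^ m)
        by (simpl; field; lra).
      rewrite exp_plus. apply Rmult_le_compat; try apply Cmod_pos; auto.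
      eapply Rle_trans. apply Hfac. apply exp_ineq1_le. }
  set (M := exp (al / (1 - r))).
  apply (cplx_geom_cauchy _ (M * al) r Hr). intros n. simpl qpoch.
  replace (Csub (Cmul (qpoch a Q n) (Csub Cone (Cmul a (Cpow Q n)))) (qpoch a Q n))
    with (Copp (Cmul (qpoch a Q n) (Cmul a (Cpow Q n)))) by ring.
  rewrite Cmod_opp, !Cmod_mul, Cmod_pow. fold al r.
  rewrite <- Rmult_assoc. apply Rmult_le_compat_r. apply pow_le; lra.
  apply Rmult_le_compat_r; auto. eapply Rle_trans. apply Hb. unfold M.
  assert (al * (1 - r ^ n) / (1 - r) <= al / (1 - r)).
  { unfold Rdiv. apply Rmult_le_compat_r. apply Rlt_le, Rinv_0_lt_compat; lra.
    assert (0 <= r ^ n) by (apply pow_le; lra). nra. }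
  destruct (Rle_lt_or_eq_dec _ _ H) as [H'|H']. left; apply exp_increasing; auto. rewrite H'; lra.
Qed.

Lemma Cpow_add z m n : Cpow z (m + n) = Cmul (Cpow z m) (Cpow z n).
Proof. induction m; simpl. ring. rewrite IHm. ring. Qed.

Lemma Cpow_mul z m n : Cpow z (m * n) = Cpow (Cpow z m) n.
Proof. induction n. rewrite Nat.mul_0_r. reflexivity.
  rewrite Nat.mul_succ_r, Cpow_add, IHn. simpl. ring. Qed.

Lemma Cpow_S z n : Cpow z (S n) = Cmul z (Cpow z n).
Proof. reflexivity. Qed.

Lemma qpoch_S a Q n : qpoch a Q (S n) = Cmul (qpoch a Q n) (Csub Cone (Cmul a (Cpow Q n))).
Proof. reflexivity. Qed.

Lemma qpoch_add a Q n m : qpoch a Q (n + m) = Cmul (qpoch a Q n) (qpoch (Cmul a (Cpow Q n)) Q m).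
Proof.
  induction m. rewrite Nat.add_0_r. simpl. ring.
  rewrite Nat.add_succ_r, !qpoch_S, IHm, Cpow_add. ring.
Qed.

Lemma Cmod_Czero : Cmod Czero = 0.
Proof. unfold Cmod, Czero; simpl. replace (0 * (0 * 1) + 0 * (0 * 1)) with 0 by ring. exact sqrt_0. Qed.

Lemma nz_of_Cmod x : 0 < Cmod x -> x <> Czero.
Proof. intros H E. subst. rewrite Cmod_Czero in H. lra. Qed.

Lemma Cmod_of_nz x : x <> Czero -> 0 < Cmod x.
Proof. intros H. destruct (Cmod_pos x) as [h|h]; auto. exfalso; apply H, Cmod_z; auto. Qed.

Lemma pow_le1 r n : 0 <= r <= 1 -> 0 <= r ^ n <= 1.
Proof. intros H. induction n; simpl; nra. Qed.

Lemma factor_nz z : Cmod z < 1 -> Csub Cone z <> Czero.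
Proof.
  intros H. apply nz_of_Cmod.
  pose proof (Cmod_tri (Csub Cone z) z).
  replace (Cadd (Csub Cone z) z) with Cone in H0 by ring. rewrite Cmod_one in H0. lra.
Qed.

Lemma qpochQ_nz Q n : Cmod Q < 1 -> qpoch (Copp Q) Q n <> Czero.
Proof.
  intros HQ. apply nz_of_Cmod. induction n.
  - simpl. rewrite Cmod_one. lra.
  - rewrite qpoch_S, Cmod_mul. apply Rmult_lt_0_compat; auto.
    apply Cmod_of_nz, factor_nz. rewrite Cmod_mul, Cmod_opp, Cmod_pow.
    pose proof (Cmod_pos Q). pose proof (pow_le1 (Cmod Q) n ltac:(lra)). nra.
Qed.

Lemma RtoC2 : RtoC 2 = Cadd Cone Cone.
Proof. unfold RtoC, Cadd, Cone; simpl. f_equal; ring. Qed.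

Lemma pow_odd q N : Cpow q (2 * N + 1) = Cmul q (Cpow (Cpow q 2) N).
Proof. replace (2 * N + 1)%nat with (S (2 * N)) by lia. rewrite Cpow_S, Cpow_mul. reflexivity. Qed.

Lemma closed_form q A (hq : Cmod q < 1) N :
  Csum (fun n => Cmul (Cmul (Cpow q (2 * n + 1)) (qpoch (Copp q) (Cpow q 2) n))
                     (Cdiv A (qpoch (Copp (Cpow q 2)) (Cpow q 2) n))) N
  = Cmul (Cdiv (Cmul q A) (Csub Cone q))
      (Csub (RtoC 2) (Cmul (Cdiv (qpoch (Copp q) (Cpow q 2) N) (qpoch (Copp (Cpow q 2)) (Cpow q 2) N))
                          (Cadd Cone (Cpow (Cpow q 2) N)))).
Proof.
  assert (HQ : Cmod (Cpow q 2) < 1).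
  { rewrite Cmod_pow. pose proof (Cmod_pos q). nra. }
  assert (H1q : Csub Cone q <> Czero) by (apply factor_nz; auto).
  rewrite RtoC2.
  induction N.
  - simpl Csum. simpl qpoch. simpl (Cpow (Cpow q 2) 0). field. split; auto.
    intro E; inversion E; lra.
  - change (Csum ?f (S N)) with (Cadd (Csum f N) (f N)). rewrite IHN. clear IHN.
    rewrite pow_odd, !qpoch_S, (Cpow_S (Cpow q 2) N).
    pose proof (qpochQ_nz (Cpow q 2) N HQ) as Hc.
    pose proof (qpochQ_nz (Cpow q 2) (S N) HQ) as Hc'. rewrite qpoch_S in Hc'.
    set (X := Cpow (Cpow q 2) N) in *.
    set (b := qpoch (Copp q) (Cpow q 2) N) in *.
    set (c := qpoch (Copp (Cpow q 2)) (Cpow q 2) N) in *.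
    assert (Hf : Csub Cone (Cmul (Copp (Cpow q 2)) X) <> Czero).
    { intro E. apply Hc'. rewrite E. ring. }
    simpl (Cpow q 2) in *.
    field. repeat split; auto. intro E; apply Hf; change (R1, R0) with Cone in E; rewrite <- E; ring.
Qed.

Theorem theorem1p1 (q : Cplx) (hq : Cmod q < 1) :
  exists (P : nat -> Cplx) (A B : Cplx),
    (forall n : nat, qpoch_inf_is (Copp (Cpow q (2 * n + 2))) (Cpow q 2) (P n)) /\
    qpoch_inf_is (Copp (Cpow q 2)) (Cpow q 2) A /\
    qpoch_inf_is (Copp q) (Cpow q 2) B /\
    series_is
      (fun n => Cmul (Cmul (Cpow q (2 * n + 1)) (qpoch (Copp q) (Cpow q 2) n)) (P n))
      (Cmul (Cdiv (Cmul q A) (Csub Cone q)) (Csub (RtoC 2) (Cdiv B A))).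
Proof.
  assert (HQ : Cmod (Cpow q 2) < 1).
  { rewrite Cmod_pow. pose proof (Cmod_pos q). nra. }
  destruct (qpoch_exists (Copp (Cpow q 2)) (Cpow q 2) HQ) as [A HA].
  destruct (qpoch_exists (Copp q) (Cpow q 2) HQ) as [B HB].
  exists (fun n => Cdiv A (qpoch (Copp (Cpow q 2)) (Cpow q 2) n)), A, B.
  split; [|split; [exact HA|split; [exact HB|]]].
  - intros n. unfold qpoch_inf_is.
    pose proof (qpochQ_nz (Cpow q 2) n HQ) as Hc.
    apply (Ccv_ext (fun m => Cdiv (qpoch (Copp (Cpow q 2)) (Cpow q 2) (n + m)) (qpoch (Copp (Cpow q 2)) (Cpow q 2) n))).
    + intros m. rewrite qpoch_add.
      replace (Cmul (Copp (Cpow q 2)) (Cpow (Cpow q 2) n)) with (Copp (Cpow q (2 * n + 2))).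
      * field. auto.
      * replace (2 * n + 2)%nat with (2 * S n)%nat by lia. rewrite Cpow_mul, Cpow_S. ring.
    + unfold Cdiv. apply Ccv_mul. apply Ccv_shift. exact HA. apply Ccv_const.
  - unfold series_is.
    eapply Ccv_ext. { intros N. symmetry. apply closed_form. exact hq. }
    destruct (Req_dec (fst A) 0) as [Ha1|Ha1]; [destruct (Req_dec (snd A) 0) as [Ha2|Ha2]|].
    + assert (A = Czero) by (destruct A; simpl in *; subst; reflexivity). subst A.
      replace (Cmul (Cdiv (Cmul q Czero) (Csub Cone q)) (Csub (RtoC 2) (Cdiv B Czero))) with Czero
        by (unfold Cdiv; ring).
      apply (Ccv_ext (fun _ => Czero)). intros N. unfold Cdiv. ring. apply Ccv_const.
    + assert (HA0 : A <> Czero) by (intro E; subst; apply Ha2; reflexivity). clear Ha1 Ha2.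
      replace (Csub (RtoC 2) (Cdiv B A)) with (Csub (RtoC 2) (Cmul (Cdiv B A) (Cadd Cone Czero))) by ring.
      apply Ccv_mul. apply Ccv_const. apply Ccv_sub. apply Ccv_const.
      apply Ccv_mul. apply Ccv_div; auto. apply Ccv_add. apply Ccv_const. apply Ccv_pow0; auto.
    + assert (HA0 : A <> Czero) by (intro E; subst; apply Ha1; reflexivity). clear Ha1.
      replace (Csub (RtoC 2) (Cdiv B A)) with (Csub (RtoC 2) (Cmul (Cdiv B A) (Cadd Cone Czero))) by ring.
      apply Ccv_mul. apply Ccv_const. apply Ccv_sub. apply Ccv_const.
      apply Ccv_mul. apply Ccv_div; auto. apply Ccv_add. apply Ccv_const. apply Ccv_pow0; auto.
Qed.
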